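(* Let $K$ be an algebraically closed field of characteristic zero, $\mathcal{K} = K(t)$, $\alpha \in \mathcal{K}$, and integers $M \ge 2$, $N \ge 1$, $d \ge 2$. Then $\alpha$ realizes portrait $(M,N)$ for $f_d(z)=z^d+t$ if and only if $f_d^{M-1}(\alpha)$ realizes portrait $(1,N)$ for $f_d$.
   Context: For $c \in K$, let $f_{d,c}(z) = z^d+c$. A point $x$ has preperiodic portrait $(M,N)$ for a map $\phi$ if $M\ge0$ is minimal with $\phi^M(x)$ periodic and $\phi^M(x)$ has exact period $N$. We say $\beta \in \mathcal{K}$ realizes portrait $(M,N)$ for $f_d$ if there exists $c \in K$ such that the specialization $\beta(c)\in\mathbb{P}^1(K)$ (reduction modulo the place $t=c$) has portrait $(M,N)$ for $f_{d,c}$. *)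

(* Defs.v *)
From HB Require Import structures.
From mathcomp Require Import all_boot all_order all_algebra.
From mathcomp Require Import fraction.
Set Implicit Arguments. Unset Strict Implicit. Unset Printing Implicit Defensive.
Import Order.TTheory GRing.Theory Num.Theory.
Local Open Scope ring_scope.

(* P^1(K) is modelled as option K : Some z = the affine point z, None = infinity. *)

Notation ratfun K := {fraction {poly K}}.
Notation "x %:F" := (@FracField.tofrac _ x) : ring_scope.

Definition fdt (K : fieldType) (d : nat) (z : ratfun K) : ratfun K :=
  z ^+ d + ('X : {poly K})%:F.

Definition fdc (K : fieldType) (d : nat) (c : K) (x : option K) : option K :=
  match x with Some z => Some (z ^+ d + c) | None => None end.

Definition exact_period (T : Type) (phi : T -> T) (y : T) (N : nat) : Prop :=
  (0 < N)%N /\ iter N phi y = y /\ forall k, (0 < k < N)%N -> iter k phi y <> y.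

Definition is_periodic (T : Type) (phi : T -> T) (y : T) : Prop :=
  exists n, (0 < n)%N /\ iter n phi y = y.

Definition has_portrait (T : Type) (phi : T -> T) (x : T) (M N : nat) : Prop :=
  is_periodic phi (iter M phi x) /\
  (forall m, (m < M)%N -> ~ is_periodic phi (iter m phi x)) /\
  exact_period phi (iter M phi x) N.

(* value of p/q at t = c in P^1(K), for coprime p, q *)
Definition eval_pt (K : fieldType) (p q : {poly K}) (c : K) : option K :=
  if q.[c] == 0 then None else Some (p.[c] / q.[c]).

Definition specializes (K : fieldType) (beta : ratfun K) (c : K) (x : option K) : Prop :=
  exists p q : {poly K}, [/\ coprimep p q, q != 0,
    beta = p%:F / q%:F & x = eval_pt p q c].

Definition realizes (K : fieldType) (d : nat) (beta : ratfun K) (M N : nat) : Prop :=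
  exists c : K, exists x, specializes beta c x /\ has_portrait (fdc d c) x M N.

(* Main.v *)
Require Import Defs.
From HB Require Import structures.
From mathcomp Require Import all_boot all_order all_algebra.
From mathcomp Require Import fraction.
From mathcomp Require Import generic_quotient.
Import GRing.Theory.
Set Implicit Arguments. Unset Strict Implicit.
Local Open Scope ring_scope.
Local Open Scope quotient_scope.

Lemma frac_rep (R : idomainType) (x : {fraction R}) :
  exists a b : R, b != 0 /\ x = (FracField.tofrac a) / (FracField.tofrac b).
Proof.
set r := repr x.
exists (r.1), (r.2); split; first exact: denom_ratioP.
have hb : FracField.tofrac r.2 != 0 by rewrite tofrac_eq0 denom_ratioP.
apply: (mulIf hb); rewrite divfK //.
have E a : FracField.tofrac a = \pi_({fraction R}) (Ratio a 1).
  by rewrite /FracField.tofrac; unlock.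
rewrite -[x]reprK -/r !E.
rewrite -[_ * _]FracField.pi_mul.
apply/eqmodP; rewrite /= FracField.equivfE /FracField.mulf.
rewrite !numden_Ratio ?oner_neq0 ?mulf_neq0 ?denom_ratioP ?oner_neq0 //.
by rewrite !mulr1 mulrC.
Qed.

Lemma spec_exists (K : fieldType) (beta : {fraction {poly K}}) c :
  exists x, specializes beta c x.
Proof.
have [a [b [b0 ->]]] := frac_rep beta.
set g := gcdp a b.
have g0 : g != 0 by rewrite gcdp_eq0 negb_and b0 orbT.
have hb : b %/ g * g = b by rewrite divpK // dvdp_gcdr.
have ha : a %/ g * g = a by rewrite divpK // dvdp_gcdl.
have q0 : b %/ g != 0.
  by apply: contraNneq b0 => e; rewrite -hb e mul0r.
exists (eval_pt (a %/ g) (b %/ g) c), (a %/ g), (b %/ g); split => //.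
  by apply: coprimep_div_gcd; rewrite b0 orbT.
have gF : (g%:F : {fraction {poly K}}) != 0 by rewrite tofrac_eq0.
rewrite -{1}ha -{1}hb !tofracM invfM mulrACA divff // mulr1 //.
Qed.

Lemma spec_unique (K : fieldType) (beta : {fraction {poly K}}) c x y :
  specializes beta c x -> specializes beta c y -> x = y.
Proof.
move=> [p [q [cpq q0 eb ->]]] [p' [q' [cpq' q0' eb' ->]]].
have qF : (q%:F : {fraction {poly K}}) != 0 by rewrite tofrac_eq0.
have qF' : (q'%:F : {fraction {poly K}}) != 0 by rewrite tofrac_eq0.
have E : p * q' = p' * q.
  apply/eqP; rewrite -(tofrac_eq (R := {poly K})) !tofracM; apply/eqP.
  have := congr1 (fun z => z * q%:F * q'%:F) (etrans (esym eb) eb').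
  move=> /=; rewrite (divfK qF) => ->.
  by rewrite (mulrAC _ q%:F) (divfK qF').
have Ec : p.[c] * q'.[c] = p'.[c] * q.[c] by rewrite -!hornerM E.
rewrite /eval_pt.
have [hq|hq] := eqVneq q.[c] 0; have [hq'|hq'] := eqVneq q'.[c] 0 => //.
- exfalso; move: Ec; rewrite hq mulr0 => /eqP; rewrite mulf_eq0 (negbTE hq') orbF.
  move=> hp; have := coprimep_root cpq hp; by rewrite hq eqxx.
- exfalso; move: Ec; rewrite hq' mulr0 => /eqP; rewrite eq_sym mulf_eq0 (negbTE hq) orbF.
  move=> hp; have := coprimep_root cpq' hp; by rewrite hq' eqxx.
- congr Some; apply/eqP; rewrite eqr_div // Ec //.
Qed.

Lemma aux (F : fieldType) (a b x : F) d : b != 0 ->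
  (a/b)^+d + x = (a^+d + x*b^+d)/(b^+d).
Proof. move=> b0; rewrite expr_div_n mulrDl mulfK ?expf_neq0 //. Qed.

Lemma spec_fdt (K : fieldType) d (beta : {fraction {poly K}}) c x :
  (0 < d)%N -> specializes beta c x -> specializes (fdt d beta) c (fdc d c x).
Proof.
move=> d0 [p [q [cpq q0 eb ->]]].
exists (p ^+ d + 'X * q ^+ d), (q ^+ d); split.
- rewrite coprimep_sym addrC coprimep_addl_mul.
  by apply: coprimep_expl; apply: coprimep_expr; rewrite coprimep_sym.
- by rewrite expf_neq0.
- have qF : (q%:F : {fraction {poly K}}) != 0 by rewrite tofrac_eq0.
  rewrite /fdt eb (aux _ _ _ qF).
  by rewrite tofracD tofracM !tofracXn.
- rewrite /eval_pt /fdc horner_exp.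
  have [hq|hq] := eqVneq q.[c] 0.
    by rewrite hq expr0n eqn0Ngt d0 /= eqxx.
  rewrite expf_eq0 (negbTE hq) andbF /=.
  congr Some; rewrite hornerD hornerM hornerX !horner_exp.
  exact: aux.
Qed.

Lemma spec_iter (K : fieldType) d (beta : {fraction {poly K}}) c x n :
  (0 < d)%N -> specializes beta c x ->
  specializes (iter n (fdt d) beta) c (iter n (fdc d c) x).
Proof.
move=> d0 h; elim: n => [|n IH] //=.
exact: spec_fdt.
Qed.

Lemma per_succ (T : Type) (phi : T -> T) y :
  is_periodic phi y -> is_periodic phi (phi y).
Proof.
move=> [n [n0 h]]; exists n; split => //.
by rewrite -iterSr iterS h.
Qed.

Lemma per_iter (T : Type) (phi : T -> T) x m j :
  is_periodic phi (iter m phi x) -> is_periodic phi (iter (j + m) phi x).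
Proof.
move=> h; elim: j => [|j IH] //=.
by rewrite ?addSn /=; apply: per_succ.
Qed.

Lemma portA (T : Type) (phi : T -> T) x M N :
  (0 < M)%N -> has_portrait phi x M N -> has_portrait phi (iter M.-1 phi x) 1 N.
Proof.
move=> M0 [P1 [P2 P3]].
have e : iter 1 phi (iter M.-1 phi x) = iter M phi x.
  by rewrite -iterS prednK.
rewrite /has_portrait e; split => //; split => //.
move=> m; rewrite ltnS leqn0 => /eqP -> /=.
by apply: P2; rewrite prednK.
Qed.

Lemma portB (T : Type) (phi : T -> T) x M N :
  (0 < M)%N -> has_portrait phi (iter M.-1 phi x) 1 N -> has_portrait phi x M N.
Proof.
move=> M0 [P1 [P2 P3]].
have e : iter 1 phi (iter M.-1 phi x) = iter M phi x.
  by rewrite -iterS prednK.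
rewrite /has_portrait -e; split => //; split => //.
move=> m mM hp; apply: (P2 0%N) => //=.
have := per_iter (M.-1 - m) hp; rewrite subnK //.
by rewrite -ltnS prednK.
Qed.

Theorem lemma3p3 (K : closedFieldType) (hchar : [pchar K] =i pred0)
  (alpha : {fraction {poly K}}) (M N d : nat) :
  (2 <= M)%N -> (1 <= N)%N -> (2 <= d)%N ->
  realizes d alpha M N <-> realizes d (iter M.-1 (fdt d) alpha) 1 N.
Proof.
move=> M2 N1 d2.
have M0 : (0 < M)%N by apply: leq_trans M2.
have d0 : (0 < d)%N by apply: leq_trans d2.
split.
- move=> [c [x [hs hp]]].
  exists c, (iter M.-1 (fdc d c) x); split.
    exact: spec_iter.
  exact: portA.
- move=> [c [y [hs hp]]].
  have [x hx] := spec_exists alpha c.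
  exists c, x; split => //.
  apply: portB => //.
  by rewrite (spec_unique (spec_iter M.-1 d0 hx) hs).
Qed.
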